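(* Let $\kappa=\frac4{27}$ and let the polynomials $e_n(x)$ be defined as in the context. Then for every integer $p\ge0$: $$e_{3p}(x)=\frac{1}{(-\kappa)^{3p}}\sum_{l=0}^p27^l\sum_{k=0}^{\lfloor 3l/2\rfloor}\frac{(-1)^k}{3^k}\binom{p+2l-k}{3l-2k,\ k,\ p-l}\Big(1-\frac{x}{3\kappa}\Big)^k,$$ $$e_{3p+1}(x)=\frac{3}{(-\kappa)^{3p+1}}\sum_{l=0}^p27^l\sum_{k=0}^{\lfloor(3l+1)/2\rfloor}\frac{(-1)^k}{3^k}\binom{p+2l+1-k}{3l+1-2k,\ k,\ p-l}\Big(1-\frac{x}{3\kappa}\Big)^k,$$ $$e_{3p+2}(x)=\frac{9}{(-\kappa)^{3p+2}}\sum_{l=0}^p27^l\sum_{k=0}^{\lfloor 3l/2\rfloor+1}\frac{(-1)^k}{3^k}\binom{p+2l+2-k}{3l+2-2k,\ k,\ p-l}\Big(1-\frac{x}{3\kappa}\Big)^k.$$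
   Context: The polynomials $e_n(x)$, $n\ge0$, are defined by $e_n(x)=(-\kappa)^{-n}\sum_{m_1+2m_2+3m_3=n}(-1)^{m_2}\binom{m_1+m_2+m_3}{m_1,m_2,m_3}3^{m_1+m_2}\big(1-\frac{x}{3\kappa}\big)^{m_2}$, the sum over nonnegative integers $m_1,m_2,m_3$; equivalently, they are the coefficients of the formal power series $\frac{1}{(1+t/\kappa)^3-x\,t^2/\kappa^3}=\sum_{n\ge0}e_n(x)t^n$. Here $\binom{k}{k_1,k_2,k_3}=\frac{k!}{k_1!k_2!k_3!}$ is the trinomial coefficient. *)

(* Defs.v *)
From mathcomp Require Import all_boot all_order all_algebra.
Set Implicit Arguments. Unset Strict Implicit. Unset Printing Implicit Defensive.
Import Order.TTheory GRing.Theory Num.Theory.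
Local Open Scope ring_scope.

Definition kappa {R : realFieldType} : R := 4%:R / 27%:R.

Definition trinom {R : realFieldType} (k k1 k2 k3 : nat) : R :=
  (k`!)%:R / ((k1`! * k2`! * k3`!)%N)%:R.

Definition e_poly {R : realFieldType} (n : nat) (x : R) : R :=
  ((- kappa) ^+ n)^-1 *
  \sum_(m1 < n.+1) \sum_(m2 < n.+1) \sum_(m3 < n.+1)
    (if (m1 + 2 * m2 + 3 * m3)%N == n then
       (-1) ^+ m2 * trinom (m1 + m2 + m3) m1 m2 m3 * 3%:R ^+ (m1 + m2)
       * (1 - x / (3%:R * kappa)) ^+ m2
     else 0).

(* Main.v *)
Require Import Defs.
From mathcomp Require Import all_boot all_order all_algebra zify ring.
Import Order.TTheory GRing.Theory Num.Theory.
Local Open Scope ring_scope.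
Lemma collapse (R : nmodType) (n a : nat) (G : nat -> R) :
  \sum_(m1 < n.+1) (if (m1 + a == n)%N then G (nat_of_ord m1) else 0) =
  if (a <= n)%N then G (n - a)%N else 0.
Proof.
case: ifP => Ha.
  have Hl : (n - a < n.+1)%N by lia.
  rewrite (bigD1 (Ordinal Hl)) //= ifT; last by apply/eqP; lia.
  rewrite big1 ?addr0 // => i /eqP Hi; rewrite ifF //.
  apply/eqP => E; apply: Hi; apply: val_inj => /=; lia.
rewrite big1 // => i _; rewrite ifF //; apply/eqP; lia.
Qed.

Lemma split_cond (R : nmodType) (N B : nat) (P : nat -> bool) (G : nat -> R) :
  (B <= N)%N -> (forall m, (m < N)%N -> P m = (m < B)%N) ->
  \sum_(m < N) (if P m then G (nat_of_ord m) else 0) = \sum_(0 <= m < B) G m.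
Proof.
move=> HB HP.
rewrite -(big_mkord xpredT (fun m => if P m then G m else 0)).
rewrite (big_cat_nat (n:=B)) //=.
rewrite [X in _ + X]big_nat_cond [X in _ + X]big1 ?addr0; last first.
  by move=> i /andP[/andP[H1 H2] _]; rewrite HP // ltnNge H1.
rewrite big_nat_cond [RHS]big_nat_cond; apply: eq_bigr => i /andP[/andP[_ H] _].
by rewrite HP ?H //; lia.
Qed.

Lemma drop_tail (R : nmodType) (N B : nat) (G : nat -> R) :
  (B <= N)%N -> (forall m, (B <= m < N)%N -> G m = 0) ->
  \sum_(m < N) G (nat_of_ord m) = \sum_(0 <= m < B) G m.
Proof.
move=> HB HG; rewrite -(big_mkord xpredT G) (big_cat_nat (n:=B)) //=.
rewrite [X in _ + X]big_nat_cond [X in _ + X]big1 ?addr0 // => i /andP[H _]; exact: HG.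
Qed.

Lemma reindex (R : nmodType) (p r : nat) (F : nat -> nat -> nat -> R) : (r < 3)%N ->
  \sum_(m1 < (3 * p + r).+1) \sum_(m2 < (3 * p + r).+1) \sum_(m3 < (3 * p + r).+1)
     (if (m1 + 2 * m2 + 3 * m3 == 3 * p + r)%N then F m1 m2 m3 else 0) =
  \sum_(0 <= l < p.+1) \sum_(0 <= k < ((3 * l + r)./2).+1) F (3 * l + r - 2 * k)%N k (p - l)%N.
Proof.
move=> Hr; set n := (3 * p + r)%N.
rewrite (exchange_big) /=.
under eq_bigr => m2 _ do rewrite exchange_big /=.
rewrite exchange_big /=.
have E : forall j i : nat, \sum_(i0 < n.+1)
           (if (i0 + 2 * i + 3 * j)%N == n then F i0 i j else 0) =
         if (2 * i + 3 * j <= n)%N then F (n - (2 * i + 3 * j))%N i j else 0.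
  move=> j i; rewrite -(@collapse _ n (2 * i + 3 * j) (fun m => F m i j)).
  by apply: eq_bigr => m _; rewrite addnA.
under eq_bigr => m3 _ do under eq_bigr => m2 _ do rewrite E.
rewrite (@drop_tail _ _ p.+1 (fun m3 => \sum_(m2 < n.+1) if (2 * m2 + 3 * m3 <= n)%N then F (n - (2 * m2 + 3 * m3))%N m2 m3 else 0)); last 2 first.
- lia.
- move=> i /andP[H1 H2]; apply: big1 => m2 _; rewrite ifF //; lia.
rewrite big_nat_rev /= add0n.
rewrite big_nat_cond [RHS]big_nat_cond; apply: eq_bigr => l /andP[/andP[_ Hl] _].
rewrite (@split_cond _ _ ((3 * l + r)./2).+1 (fun m2 => (2 * m2 + 3 * (p.+1 - l.+1)%N <= n)%N) (fun m2 => F (n - (2 * m2 + 3 * (p.+1 - l.+1)%N))%N m2 (p.+1 - l.+1)%N)); last 2 first.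
- rewrite -!divn2; lia.
- move=> m _; rewrite -!divn2; apply/idP/idP; lia.
- apply: eq_big_nat => k Hk.
  rewrite -!divn2 in Hk.
  have -> : (p.+1 - l.+1 = p - l)%N by lia.
  by have -> : (n - (2 * k + 3 * (p - l)) = 3 * l + r - 2 * k)%N by lia.
Qed.

Lemma e_gen (R : realFieldType) (p r : nat) (x : R) : (r < 3)%N ->
  e_poly (3 * p + r) x =
  ((- kappa) ^+ (3 * p + r))^-1 * 3%:R ^+ r *
        \sum_(0 <= l < p.+1) 27%:R ^+ l *
          \sum_(0 <= k < (3 * l + r)./2.+1)
            (-1) ^+ k / 3%:R ^+ k *
            trinom (p + 2 * l + r - k) (3 * l + r - 2 * k) k (p - l) *
            (1 - x / (3%:R * kappa)) ^+ k.
Proof.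
move=> Hr; rewrite /e_poly.
set y := (1 - x / (3%:R * kappa)).
have H := @reindex R p r (fun m1 m2 m3 => (-1) ^+ m2 * trinom (m1 + m2 + m3) m1 m2 m3 * (3%:R : R) ^+ (m1 + m2) * y ^+ m2) Hr.
rewrite /= in H; rewrite H -mulrA; congr (_ * _).
rewrite mulr_sumr; apply: eq_big_nat => l Hl.
rewrite mulrA mulr_sumr; apply: eq_big_nat => k Hk.
rewrite -divn2 in Hk.
have -> : (3 * l + r - 2 * k + k + (p - l) = p + 2 * l + r - k)%N by lia.
have -> : (3 * l + r - 2 * k + k = 3 * l + r - k)%N by lia.
have Ha : (3%:R : R) ^+ (3 * l + r - k) * 3%:R ^+ k = 3%:R ^+ r * 27%:R ^+ l.
  rewrite -exprD subnK; last by lia.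
  by rewrite addnC exprD exprM -[3%:R ^+ 3]natrX.
have H3 : (3%:R : R) ^+ k != 0 by rewrite expf_neq0 // pnatr_eq0.
rewrite -Ha; field; exact: H3.
Qed.

Lemma halfS2 (m : nat) : ((m + 2)./2 = m./2 + 1)%N.
Proof. rewrite -!divn2; lia. Qed.

Theorem proposition10 (R : realFieldType) (p : nat) (x : R) :
  [/\ e_poly (3 * p) x =
        ((- kappa) ^+ (3 * p))^-1 *
        \sum_(0 <= l < p.+1) 27%:R ^+ l *
          \sum_(0 <= k < (3 * l)./2.+1)
            (-1) ^+ k / 3%:R ^+ k *
            trinom (p + 2 * l - k) (3 * l - 2 * k) k (p - l) *
            (1 - x / (3%:R * kappa)) ^+ k,
      e_poly (3 * p + 1) x =
        3%:R / (- kappa) ^+ (3 * p + 1) *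
        \sum_(0 <= l < p.+1) 27%:R ^+ l *
          \sum_(0 <= k < (3 * l + 1)./2.+1)
            (-1) ^+ k / 3%:R ^+ k *
            trinom (p + 2 * l + 1 - k) (3 * l + 1 - 2 * k) k (p - l) *
            (1 - x / (3%:R * kappa)) ^+ k
    & e_poly (3 * p + 2) x =
        9%:R / (- kappa) ^+ (3 * p + 2) *
        \sum_(0 <= l < p.+1) 27%:R ^+ l *
          \sum_(0 <= k < ((3 * l)./2 + 1).+1)
            (-1) ^+ k / 3%:R ^+ k *
            trinom (p + 2 * l + 2 - k) (3 * l + 2 - 2 * k) k (p - l) *
            (1 - x / (3%:R * kappa)) ^+ k].
Proof.
split.
- have := @e_gen R p 0 x isT; rewrite addn0 expr0 mulr1 => ->.
  by under eq_bigr => l _ do (under eq_bigr => k _ do rewrite !addn0; rewrite addn0).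
- by rewrite (@e_gen R p 1 x isT) expr1 [_ * 3%:R]mulrC.
- rewrite (@e_gen R p 2 x isT) [_ * 3%:R ^+ 2]mulrC -natrX.
  by under eq_bigr => l _ do rewrite halfS2.
Qed.
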